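(* Let $W$ be a finite set of possible worlds and let $G=(2^W,\gg)$ and $G'=(2^W,\gg')$ be belief algebras on $W$. Then $G\cap G'=(2^W,\gg\cap\gg')$ is a belief algebra.
   Context: $R_W=\{(U,V)\mid U,V\subseteq W,\ U\cap V=\varnothing\}$. A belief algebra on $W$ is a pair $(2^W,\gg)$, $\gg$ a binary relation on $2^W$, such that for all $U,V,U_1,V_1,U_2,V_2\subseteq W$: (A0) $\gg\subseteq R_W$; (A1) $U\gg\varnothing$ iff $U\neq\varnothing$; (A2) if $U\gg V$ then not $V\gg U$; (A3) if $U_1\supseteq U$, $U\gg V$, $V\supseteq V_1$ and $U_1\cap V_1=\varnothing$, then $U_1\gg V_1$; (A4) if $U=U_1\cup V_1=U_2\cup V_2$, $U_1\gg V_1$ and $U_2\gg V_2$, then $U_1\cap U_2\gg V_1\cup V_2$. Relations are viewed as sets of pairs. *)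

(* Defs.v *)
From mathcomp Require Import all_boot.
Set Implicit Arguments. Unset Strict Implicit. Unset Printing Implicit Defensive.

Definition brel (W : finType) := {set W} -> {set W} -> Prop.

Definition rel_inter (W : finType) (g g' : brel W) : brel W :=
  fun U V => g U V /\ g' U V.

Definition belief_algebra (W : finType) (gg : brel W) : Prop :=
  (forall U V : {set W}, gg U V -> U :&: V = set0) /\
  (forall U, gg U set0 <-> U != set0) /\
  (forall U V, gg U V -> ~ gg V U) /\
  (forall U V U1 V1 : {set W}, U \subset U1 -> gg U V -> V1 \subset V ->
              U1 :&: V1 = set0 -> gg U1 V1) /\
  (forall U U1 V1 U2 V2 : {set W}, U = U1 :|: V1 -> U = U2 :|: V2 ->
              gg U1 V1 -> gg U2 V2 -> gg (U1 :&: U2) (V1 :|: V2)).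

(* Main.v *)
Require Import Defs.
From mathcomp Require Import all_boot.

Theorem proposition1 (W : finType) (gg gg' : brel W) :
  belief_algebra gg -> belief_algebra gg' -> belief_algebra (rel_inter gg gg').
Proof.
  move=> [A0 [A1 [A2 [A3 A4]]]] [B0 [B1 [B2 [B3 B4]]]]; rewrite /rel_inter.
  split; first by move=> U V [H _]; exact: A0 H.
  split; first by move=> U; split; [move=> [H _]; exact/A1 | move=> H; split; [exact/A1|exact/B1]].
  split; first by move=> U V [H _] [H' _]; exact: A2 H H'.
  split; first by move=> U V U1 V1 s [H H'] s' d; split; [exact: A3 s H s' d | exact: B3 s H' s' d].
  move=> U U1 V1 U2 V2 e1 e2 [H H'] [K K']; split; [exact: A4 e1 e2 H K | exact: B4 e1 e2 H' K'].
Qed.
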